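(* Let $n\ge 2$ and let $A$ be an $n\times n$ real matrix with spectrum $\{\lambda_1,\dots,\lambda_n\}$ (counting multiplicities). Suppose $\lambda_1$ is real and associated with a real eigenvector $v$ with no zero components, let $D=\mathrm{diag}(v)$ and $B=D^{-1}AD$. Then for every $p\in\mathbb{N}\cup\{\infty\}$, every $i=2,\dots,n$ and every $k\in\mathbb{N}$, $$|\lambda_i|\le\sqrt[k]{\tau_p(B^k)}.$$
   Context: For an $n\times n$ real matrix $M$ ($n\ge 2$) and $p\in\mathbb{N}\cup\{\infty\}$, define $$\tau_p(M)=\max\{\|M^Tx\|_p: x\in\mathbb{R}^n,\ x^Te=0,\ \|x\|_p=1\},$$ where $e$ is the all-ones vector and $\|\cdot\|_p$ is the $\ell_p$-norm. *)

(* Defs.v *)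
From HB Require Import structures.
From mathcomp Require Import all_boot all_order all_algebra.
From mathcomp Require Import all_classical all_reals.
From mathcomp Require Import exp.
From mathcomp Require Import complex.
Set Implicit Arguments. Unset Strict Implicit. Unset Printing Implicit Defensive.
Import Order.TTheory GRing.Theory Num.Theory.
Local Open Scope ring_scope.
Local Open Scope classical_set_scope.

(* Exponent p in N u {oo}: [Some q] is the finite exponent q (the theorem
   requires q >= 1), [None] is p = oo. *)
Definition pnorm (R : realType) (n : nat) (p : option nat) (x : 'cV[R]_n) : R :=
  match p with
  | Some q => (\sum_(i < n) `|x i 0| `^ q%:R) `^ (q%:R)^-1
  | None => \big[Num.max/0]_(i < n) `|x i 0|
  end.

(* tau_p(M) = max { ||M^T x||_p : x^T e = 0, ||x||_p = 1 } (taken as a sup;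
   the maximum is attained by compactness). *)
Definition tau (R : realType) (n : nat) (p : option nat) (M : 'M[R]_n) : R :=
  sup [set r : R | exists x : 'cV[R]_n,
         \sum_(i < n) x i 0 = 0 /\ pnorm p x = 1 /\ r = pnorm p (M^T *m x)].

Definition cmod (R : realType) (z : R[i]) : R :=
  let: Complex a b := z in Num.sqrt (a ^+ 2 + b ^+ 2).

(* Main.v *)
Require Import Defs.
From HB Require Import structures.
From mathcomp Require Import all_boot all_order all_algebra.
From mathcomp Require Import all_classical all_reals.
From mathcomp Require Import exp.
From mathcomp Require Import complex.
From mathcomp Require Import lra ring.
Import Order.TTheory GRing.Theory Num.Theory.
Local Open Scope ring_scope.

Section PNorm.
Variable R : realType.
Variable n : nat.
Variable p : option nat.
Hypothesis hp : forall q, p = Some q -> (1 <= q)%N.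

Lemma pnorm_ge0 (x : 'cV[R]_n) : 0 <= pnorm p x.
Proof.
case: p => [q|] /=; first exact: powR_ge0.
by elim/big_ind: _ => // a b ha hb; rewrite le_max ha.
Qed.

Lemma pnormZ (a : R) (x : 'cV[R]_n) : pnorm p (a *: x) = `|a| * pnorm p x.
Proof.
case: p hp => [q|] hq /=; last first.
  rewrite (big_morph (fun y => `|a| * y) (fun y z => maxr_pMr y z (normr_ge0 a)) (mulr0 _)).
  by apply: eq_bigr => i _; rewrite mxE normrM.
have q1 := hq q erefl.
have q0 : (q%:R : R) != 0 by rewrite pnatr_eq0 -lt0n.
under eq_bigr => i _ do rewrite mxE normrM powRM //.
rewrite -mulr_sumr powRM ?powR_ge0 ?sumr_ge0 // => [|i _]; last exact: powR_ge0.
by rewrite -powRrM mulfV // powRr1.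
Qed.

Lemma pnorm_entry (x : 'cV[R]_n) j : `|x j 0| <= pnorm p x.
Proof.
case: p hp => [q|] hq /=; last first.
  by rewrite (bigD1 j) //= le_max lexx.
have q1 := hq q erefl.
have q0 : (q%:R : R) != 0 by rewrite pnatr_eq0 -lt0n.
have -> : `|x j 0| = (`|x j 0| `^ q%:R) `^ (q%:R)^-1.
  by rewrite -powRrM mulfV // powRr1.
apply: ge0_ler_powR; rewrite ?nnegrE ?invr_ge0 ?ler0n ?powR_ge0 ?sumr_ge0 //.
  by move=> i _; exact: powR_ge0.
rewrite (bigD1 j) //= lerDl sumr_ge0 // => i _; exact: powR_ge0.
Qed.

Lemma pnorm_mono (x y : 'cV[R]_n) :
  (forall j, `|x j 0| <= `|y j 0|) -> pnorm p x <= pnorm p y.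
Proof.
move=> hxy.
case: p hp => [q|] hq /=; last first.
  exact: le_bigmax2.
have q1 := hq q erefl.
apply: ge0_ler_powR; rewrite ?nnegrE ?invr_ge0 ?ler0n ?sumr_ge0 //; 
  try by move=> i _; exact: powR_ge0.
apply: ler_sum => i _; apply: ge0_ler_powR; rewrite ?nnegrE //.
Qed.

End PNorm.
Local Notation Re := complex.Re.
Local Notation Im := complex.Im.

Section Cx.
Variable R : realType.
Local Open Scope complex_scope.

Lemma cmodE (z : R[i]) : cmod z = Num.sqrt (Re z ^+ 2 + Im z ^+ 2).
Proof. by case: z. Qed.

Lemma cmod_ge0 (z : R[i]) : 0 <= cmod z.
Proof. by rewrite cmodE sqrtr_ge0. Qed.

Lemma cmodM (a b : R[i]) : cmod (a * b) = cmod a * cmod b.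
Proof. by have := Normc.normcM a b; case: a; case: b. Qed.

Lemma cmodX (a : R[i]) m : cmod (a ^+ m) = cmod a ^+ m.
Proof.
elim: m => [|m ih]; last by rewrite !exprS cmodM ih.
by rewrite !expr0 cmodE /= expr0n /= addr0 expr1n sqrtr1.
Qed.

Lemma cmodR (a : R) : cmod (a%:C) = `|a|.
Proof. by rewrite cmodE /= expr0n /= addr0 sqrtr_sqr. Qed.

Lemma cmodJ (a : R[i]) : cmod (conjc a) = cmod a.
Proof. by case: a => x y; rewrite !cmodE /= sqrrN. Qed.

Lemma Re_le_cmod (a : R[i]) : `|Re a| <= cmod a.
Proof.
rewrite cmodE -sqrtr_sqr ler_sqrt ?addr_ge0 ?sqr_ge0 //.
by rewrite lerDl sqr_ge0.
Qed.

Lemma cmod_eq0 (a : R[i]) : cmod a = 0 -> a = 0.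
Proof. by move=> h; apply: (@Normc.eq0_normc R); case: a h. Qed.

Lemma conjcM_self (a : R[i]) : conjc a * a = ((cmod a) ^+ 2)%:C.
Proof.
case: a => x y; rewrite cmodE /= sqr_sqrtr ?addr_ge0 ?sqr_ge0 //.
apply/eqP; rewrite eq_complex /=; apply/andP; split; apply/eqP; ring.
Qed.

Lemma ReD (a b : R[i]) : Re (a + b) = Re a + Re b.
Proof. by case: a; case: b. Qed.

Lemma ReRM (r : R) (a : R[i]) : Re (r%:C * a) = r * Re a.
Proof. by case: a => x y /=; ring. Qed.

Lemma Re_sum I (s : seq I) (P : pred I) (F : I -> R[i]) :
  Re (\sum_(i <- s | P i) F i) = \sum_(i <- s | P i) Re (F i).
Proof. exact: (big_morph _ ReD). Qed.

Lemma Re_mul_sum (c : R[i]) I (s : seq I) (F : I -> R[i]) :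
  \sum_(i <- s) F i = 0 -> \sum_(i <- s) Re (c * F i) = 0.
Proof. by move=> h; rewrite -Re_sum -mulr_sumr h mulr0. Qed.

End Cx.

Section Key.
Variables (R : realType) (n : nat) (p : option nat).
Hypothesis hp : forall q, p = Some q -> (1 <= q)%N.
Local Notation N := (@pnorm R n p).

Lemma pnorm0 : N 0 = 0.
Proof. by rewrite -(scale0r (0:'cV[R]_n)) pnormZ // normr0 mul0r. Qed.

Lemma pnorm_bound (y : 'cV[R]_n) K : 0 <= K -> (forall j, `|y j 0| <= K) ->
  N y <= K * N (const_mx 1).
Proof.
move=> K0 h; rewrite -(ger0_norm K0) -pnormZ //; apply: pnorm_mono => // j.
rewrite !mxE mulr1 (ger0_norm K0); exact: h.
Qed.

Definition Sset (M : 'M[R]_n) := [set r : R | exists x : 'cV[R]_n,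
  \sum_(i < n) x i 0 = 0 /\ N x = 1 /\ r = N (M *m x)]%classic.

Lemma Sset_ub M : has_ubound (Sset M).
Proof.
exists ((\sum_j \sum_l `|M j l|) * N (const_mx 1)) => r [x [_ [nx ->]]].
apply: pnorm_bound.
  by apply: sumr_ge0 => j _; apply: sumr_ge0 => l _.
move=> j; rewrite mxE; apply: (le_trans (ler_norm_sum _ _ _)).
apply: (@le_trans _ _ (\sum_l `|M j l|)).
  apply: ler_sum => l _; rewrite normrM; apply: ler_piMr => //.
  by rewrite -nx pnorm_entry.
rewrite [leRHS](bigD1 j) //= lerDl; by apply: sumr_ge0 => i _; apply: sumr_ge0.
Qed.

Lemma ub_Mw (M : 'M[R]_n) (w : 'cV[R]_n) : \sum_j w j 0 = 0 -> N (M *m w) <= sup (Sset M) * N w.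
Proof.
move=> hw.
have [nw0|nwp] := eqVneq (N w) 0.
  have -> : w = 0.
    apply/matrixP => i j; rewrite ord1 mxE; apply/eqP; rewrite -normr_eq0.
    by rewrite eq_le normr_ge0 andbT -nw0 pnorm_entry.
  by rewrite mulmx0 pnorm0 mulr0.
have nwg : 0 < N w by rewrite lt_def nwp pnorm_ge0.
have inS : Sset M (N (M *m ((N w)^-1 *: w))).
  exists ((N w)^-1 *: w); split; last split => //.
    by under eq_bigr do rewrite mxE; rewrite -mulr_sumr hw mulr0.
  by rewrite pnormZ // ger0_norm ?invr_ge0 ?pnorm_ge0 // mulVf.
have := sup_upper_bound (conj (ex_intro _ _ inS) (Sset_ub M)) inS.
rewrite -scalemxAr pnormZ // ger0_norm ?invr_ge0 ?pnorm_ge0 // => h.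
by rewrite -ler_pdivrMr // mulrC.
Qed.

Lemma sup_ge0 (M : 'M[R]_n) (w : 'cV[R]_n) : \sum_j w j 0 = 0 -> w != 0 -> 0 <= sup (Sset M).
Proof.
move=> hw w0.
have nwp : N w != 0.
  apply: contraNneq w0 => nw0; apply/eqP/matrixP => i j; rewrite ord1 mxE; apply/eqP.
  by rewrite -normr_eq0 eq_le normr_ge0 andbT -nw0 pnorm_entry.
have nwg : 0 < N w by rewrite lt_def nwp pnorm_ge0.
have inS : Sset M (N (M *m ((N w)^-1 *: w))).
  exists ((N w)^-1 *: w); split; last split => //.
    by under eq_bigr do rewrite mxE; rewrite -mulr_sumr hw mulr0.
  by rewrite pnormZ // ger0_norm ?invr_ge0 ?pnorm_ge0 // mulVf.
have := sup_upper_bound (conj (ex_intro _ _ inS) (Sset_ub M)) inS.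
by apply: le_trans; apply: pnorm_ge0.
Qed.

Lemma iter_bound (M : 'M[R]_n) : 0 <= sup (Sset M) ->
  (forall x : 'cV[R]_n, \sum_j x j 0 = 0 -> \sum_j (M *m x) j 0 = 0) ->
  forall m (w : 'cV[R]_n), \sum_j w j 0 = 0 ->
  \sum_j (M ^+ m *m w) j 0 = 0 /\ N (M ^+ m *m w) <= sup (Sset M) ^+ m * N w.
Proof.
move=> s0 hM; elim => [|m ih] w hw; first by rewrite !expr0 mul1mx mul1r.
have [h1 h2] := ih w hw.
rewrite exprS -mulmxE -mulmxA; split; first exact: hM.
apply: le_trans (ub_Mw M _ h1) _.
by rewrite exprS -mulrA ler_wpM2l.
Qed.

End Key.

Lemma growth (R : realType) (r t a K : R) : 0 < a -> 0 <= t ->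
  (forall m, r ^+ m * a <= t ^+ m * K) -> r <= t.
Proof.
move=> a0 t0 h; rewrite leNgt; apply/negP => tr.
have r0 : 0 < r := le_lt_trans t0 tr.
have [t00|tn0] := eqVneq t 0.
  have := h 1%N; rewrite t00 !expr1 mul0r => h1.
  by have := mulr_gt0 r0 a0; rewrite ltNge h1.
have tg : 0 < t by rewrite lt_def tn0.
have claim : forall m, t ^+ m * (r + m%:R * (r - t)) <= r ^+ m.+1.
  elim => [|m ih]; first by rewrite expr0 mul1r mul0r addr0 expr1.
  have step : t * (r + m.+1%:R * (r - t)) <= r * (r + m%:R * (r - t)).
    rewrite -subr_ge0.
    have -> : r * (r + m%:R * (r - t)) - t * (r + m.+1%:R * (r - t))
              = m.+1%:R * (r - t) ^+ 2 by rewrite -natr1; ring.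
    by rewrite mulr_ge0 ?ler0n ?sqr_ge0.
  rewrite exprSr -mulrA (le_trans (ler_wpM2l (exprn_ge0 m t0) step)) //.
  by rewrite mulrCA [X in _ <= X]exprS ler_wpM2l // ltW.
have Kb : forall m, m%:R * (r - t) * a <= r * K.
  move=> m; have hm := h m; have cm := claim m.
  have : t ^+ m * ((r + m%:R * (r - t)) * a) <= t ^+ m * (r * K).
    rewrite mulrA (le_trans (ler_wpM2r (ltW a0) cm)) //.
    by rewrite exprS -mulrA [leRHS]mulrCA; apply: ler_wpM2l => //; exact: ltW.
  rewrite ler_pM2l ?exprn_gt0 // mulrDl => h2.
  by rewrite (le_trans _ h2) // lerDr mulr_ge0 ?ltW.
have rK0 : 0 <= r * K by have := Kb 0%N; rewrite mul0r mul0r.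
have da : 0 < (r - t) * a by rewrite mulr_gt0 // subr_gt0.
have := archi_boundP (divr_ge0 rK0 (ltW da)).
set m := Num.Def.archi_bound _ => hm.
have := Kb m; rewrite -mulrA; rewrite ltr_pdivrMr // in hm.
by rewrite leNgt hm.
Qed.


Section Key2.
Variables (R : realType) (n : nat) (p : option nat).
Hypothesis hp : forall q, p = Some q -> (1 <= q)%N.
Local Notation N := (@pnorm R n p).
Local Open Scope complex_scope.

Lemma key (M : 'M[R]_n) (mu : R[i]) (z : 'cV[R[i]]_n) :
  z != 0 -> \sum_j z j 0 = 0 -> map_mx (real_complex R) M *m z = mu *: z ->
  (forall x : 'cV[R]_n, \sum_j x j 0 = 0 -> \sum_j (M *m x) j 0 = 0) ->
  cmod mu <= sup (Sset R n p M).
Proof.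
move=> z0 zs hz hM.
set Mc := map_mx _ M in hz.
have [j0 hj0] : exists j, z j 0 != 0.
  apply/existsP; apply: contraNT z0; rewrite negb_exists => /forallP h.
  apply/eqP/matrixP => i k; rewrite ord1 mxE.
  by move: (h i); rewrite negbK => /eqP.
pose z' := (conjc (z j0 0)) *: z.
have z's : \sum_j z' j 0 = 0.
  by under eq_bigr do rewrite mxE; rewrite -mulr_sumr zs mulr0.
have hz' : Mc *m z' = mu *: z' by rewrite -scalemxAr hz !scalerA mulrC.
pose x := map_mx (@complex.Re R) z'.
have x0 : 0 < `|x j0 0|.
  rewrite !mxE conjcM_self /= normr_gt0 expf_eq0 /=.
  by apply: contra hj0 => /eqP/cmod_eq0 ->.
have xs : \sum_j x j 0 = 0.
  by under eq_bigr do rewrite mxE; rewrite -Re_sum z's.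
have xn0 : x != 0.
  by apply: contraTneq x0 => ->; rewrite mxE normr0 ltxx.
have Nx : 0 < N x := lt_le_trans x0 (@pnorm_entry R n p hp x j0).
have reM1 : forall w : 'cV[R[i]]_n, M *m map_mx (@complex.Re R) w = map_mx (@complex.Re R) (Mc *m w).
  move=> w; apply/matrixP => i k; rewrite !mxE Re_sum; apply: eq_bigr => l _.
  by rewrite !mxE ReRM.
have reM : forall m (w : 'cV[R[i]]_n), M ^+ m *m map_mx (@complex.Re R) w = map_mx (@complex.Re R) (Mc ^+ m *m w).
  elim => [|m ih] w; first by rewrite !expr0 !mul1mx.
  by rewrite !exprS -!mulmxE -!mulmxA ih reM1.
have eigm : forall m, Mc ^+ m *m z' = mu ^+ m *: z'.
  elim => [|m ih]; first by rewrite !expr0 mul1mx scale1r.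
  by rewrite exprS -mulmxE -mulmxA ih -scalemxAr hz' scalerA -exprSr.
have s0 : 0 <= sup (Sset R n p M) := @sup_ge0 R n p hp M x xs xn0.
have [mu0|mun0] := eqVneq mu 0.
  by rewrite mu0 (_ : 0 = 0%:C) // cmodR normr0.
set r := cmod mu.
pose Kz := \sum_j cmod (z' j 0).
have Kz0 : 0 <= Kz by apply: sumr_ge0 => j _; exact: cmod_ge0.
have r0 : 0 < r.
  rewrite lt_def cmod_ge0 andbT; apply: contra mun0 => /eqP /cmod_eq0 ->.
  by [].
apply: (@growth R r _ (N x) (Kz * N (const_mx 1))) => // m.
pose c := conjc (mu ^+ m) * ((r ^+ m)^-1)%:C.
pose y := map_mx (@complex.Re R) (c *: z').
have cmu : c * mu ^+ m = (r ^+ m)%:C.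
  rewrite /c mulrAC conjcM_self cmodX -rmorphM /=.
  by rewrite expr2 mulfK // expf_neq0 // gt_eqF.
have My : M ^+ m *m y = r ^+ m *: x.
  rewrite reM -scalemxAr eigm scalerA cmu; apply/matrixP => i k.
  by rewrite !mxE ReRM.
have ys : \sum_j y j 0 = 0.
  have h : \sum_j (c *: z') j 0 = 0.
    rewrite (eq_bigr (fun j => c * z' j 0)) => [|j _]; last by rewrite mxE.
    by rewrite -mulr_sumr z's mulr0.
  transitivity (complex.Re (\sum_j (c *: z') j 0)); last by rewrite h.
  by rewrite Re_sum; apply: eq_bigr => j _; rewrite mxE.
have cm1 : cmod c = 1.
  rewrite cmodM cmodJ cmodX cmodR ger0_norm ?invr_ge0 ?exprn_ge0 ?ltW //.
  by rewrite mulfV // expf_neq0 // gt_eqF.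
have Ny : N y <= Kz * N (const_mx 1).
  apply: (@pnorm_bound R n p hp) => // j; rewrite mxE [X in complex.Re X]mxE.
  apply: (le_trans (Re_le_cmod _ _)); rewrite cmodM cm1 mul1r /Kz.
  rewrite (bigD1 j) //= lerDl; apply: sumr_ge0 => i _; exact: cmod_ge0.
have [_ hb] := @iter_bound R n p hp M s0 hM m y ys.
rewrite -(ger0_norm (exprn_ge0 m (ltW r0))) -(@pnormZ R n p hp) -My.
apply: (le_trans hb); apply: ler_wpM2l => //; exact: exprn_ge0.
Qed.

End Key2.
Section Alg.
Variable F : fieldType.

Lemma char_poly_sim n (T S M : 'M[F]_n) : T *m S = 1%:M ->
  char_poly (T *m M *m S) = char_poly M.
Proof.
move=> TS.
rewrite /char_poly.
have -> : char_poly_mx (T *m M *m S) =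
   map_mx polyC T *m char_poly_mx M *m map_mx polyC S.
  rewrite /char_poly_mx mulmxBr mulmxBl -!map_mxM.
  congr (_ - _).
  by rewrite mul_mx_scalar -scalemxAl -map_mxM TS map_mx1 scalemx1.
by rewrite !det_mulmx mulrAC -det_mulmx -map_mxM TS map_mx1 det1 mul1r.
Qed.


Lemma cpmxE n (M : 'M[F]_n) i j :
  char_poly_mx M i j = 'X *+ (i == j) - (M i j)%:P.
Proof. by rewrite !mxE. Qed.

Lemma left_eig n (B : 'M[F]_n.+1) (c mu : F) (q : {poly F}) :
  B *m (const_mx 1 : 'cV_n.+1) = c *: const_mx 1 ->
  char_poly B = ('X - c%:P) * q -> root q mu ->
  exists z : 'rV[F]_n.+1, [/\ z != 0, z *m B = mu *: z & z *m (const_mx 1 : 'cV_n.+1) = 0].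
Proof.
move=> Be hchar hroot.
pose E : 'M[F]_n.+1 := \matrix_(i, j) ((j == ord0) && (i != ord0))%:R.
have EE : E *m E = 0.
  apply/matrixP => i j; rewrite !mxE; apply: big1 => k _; rewrite !mxE.
  by case: (k == ord0); rewrite ?andbF ?mulr0 ?mul0r.
pose S : 'M[F]_n.+1 := 1%:M + E.
pose T : 'M[F]_n.+1 := 1%:M - E.
have TS : T *m S = 1%:M.
  by rewrite /T /S mulmxBl !mulmxDr !mul1mx mulmx1 EE addr0 addrK.
have ST : S *m T = 1%:M.
  by rewrite /T /S mulmxDl !mulmxBr !mul1mx mulmx1 EE subr0 addrNK.
pose e : 'cV[F]_n.+1 := const_mx 1.
pose e1 : 'cV[F]_n.+1 := delta_mx ord0 ord0.
have Se1 : S *m e1 = e.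
  apply/matrixP => i j; rewrite !mxE (bigD1 ord0) //= big1 => [|k /negbTE k0];
    rewrite !mxE ?k0 ?eqxx ?mulr0 //.
  rewrite ord1 !eqxx mulr1 addr0.
  by case: (i == ord0) => /=; rewrite ?addr0 ?add0r.
have Te : T *m e = e1 by rewrite -Se1 mulmxA TS mul1mx.
pose Bt := T *m B *m S.
have hsim : char_poly Bt = char_poly B by rewrite /Bt char_poly_sim.
have BtT : T *m B = Bt *m T by rewrite /Bt -mulmxA ST mulmx1.
have Bte1 : Bt *m e1 = c *: e1.
  by rewrite /Bt -mulmxA Se1 -mulmxA Be -scalemxAr Te.
have Bt0 : forall i, Bt i ord0 = c * e1 i ord0.
  move=> i; have := congr1 (fun M : 'cV[F]_n.+1 => M i ord0) Bte1.
  rewrite !mxE (bigD1 ord0) //= big1 => [|k /negbTE k0]; rewrite !mxE ?k0 ?mulr0 //.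
  by rewrite !eqxx mulr1 addr0 => ->.
clearbody Bt.
pose B' := row' ord0 (col' ord0 Bt).
have hchar' : char_poly Bt = ('X - c%:P) * char_poly B'.
  rewrite /char_poly (expand_det_col _ ord0) big_ord_recl big1 => [|i _]; last first.
    rewrite cpmxE Bt0 !mxE /= mulr0 subr0.
    by rewrite mulr0n mul0r.
  rewrite addr0 /cofactor row'_col'_char_poly_mx cpmxE Bt0 !mxE !eqxx /= mulr1 mulr1n.
  by rewrite expr0 mul1r.
have hq : char_poly B' = q.
  apply: (@mulfI _ ('X - c%:P)); first by rewrite polyXsubC_eq0.
  by rewrite -hchar' -hchar hsim.
have : eigenvalue B' mu by rewrite eigenvalue_root_char hq.
case/eigenvalueP => u uB u0.
pose w : 'rV[F]_n.+1 := \row_j (if unlift ord0 j is Some k then u ord0 k else 0).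
have w0 : w != 0.
  apply: contraNneq u0 => wz; apply/eqP/rowP => k.
  by have := congr1 (fun M : 'rV[F]_n.+1 => M ord0 (lift ord0 k)) wz; rewrite !mxE liftK.
have wB : w *m Bt = mu *: w.
  apply/rowP => k; rewrite !mxE big_ord_recl !mxE unlift_none mul0r add0r.
  case: (unliftP ord0 k) => [k'|] ->.
    have := congr1 (fun M : 'rV[F]_n => M ord0 k') uB; rewrite !mxE => <-.
    by apply: eq_bigr => i _; rewrite !mxE liftK.
  rewrite ?unlift_none mulr0; apply: big1 => i _.
  by rewrite !mxE liftK Bt0 !mxE lift_eqF mulr0 mulr0.
exists (w *m T); split.
- apply: contraNneq w0 => wT.
  by rewrite -[w]mulmx1 -TS mulmxA wT mul0mx.
- have -> : w *m T *m B = w *m Bt *m T by rewrite -mulmxA BtT mulmxA.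
  by rewrite wB scalemxAl.
- rewrite -mulmxA Te; apply/matrixP => i j; rewrite !mxE (bigD1 ord0) //= big1.
    by rewrite !mxE unlift_none mul0r addr0.
  by move=> k /negbTE k0; rewrite !mxE k0 mulr0.
Qed.

End Alg.

Theorem corollary3 (R : realType) (n : nat) (A : 'M[R]_n)
    (lam : 'I_n -> R[i]) (i1 : 'I_n) (l1 : R) (v : 'cV[R]_n) :
  (1 < n)%N ->
  (* lam enumerates the spectrum of A with multiplicities *)
  map_poly (fun x : R => x%:C%C) (char_poly A) = \prod_(j < n) ('X - (lam j)%:P) ->
  (* lambda_1 = lam i1 is real, with real eigenvector v without zero entries *)
  lam i1 = l1%:C%C ->
  A *m v = l1 *: v ->
  (forall j : 'I_n, v j 0 != 0) ->
  let D := diag_mx v^T in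
  let B := invmx D *m A *m D in
  forall (p : option nat), (forall q, p = Some q -> (1 <= q)%N) ->
  forall (i : 'I_n), i != i1 ->
  forall (k : nat), (1 <= k)%N ->
    cmod (lam i) <= tau p (B ^+ k) `^ (k%:R)^-1.
Proof.
case: n A lam i1 v => [|n'] A lam i1 v n1; first by [].
move=> hchar hl1 hAv hv D B p hp i hi k hk.
pose e : 'cV[R]_n'.+1 := const_mx 1.
have Du : D \in unitmx.
  rewrite unitmxE det_diag unitfE; apply/prodf_neq0 => j _; rewrite mxE; exact: hv.
have De : D *m e = v.
  by rewrite /D mul_diag_mx; apply/matrixP => a b; rewrite !mxE ord1 mulr1.
have Dv : invmx D *m v = e by rewrite -De mulmxA mulVmx // mul1mx.
have Be : B *m e = l1 *: e.
  by rewrite /B -!mulmxA De hAv -scalemxAr Dv.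
have Bke : forall m, B ^+ m *m e = l1 ^+ m *: e.
  elim => [|m ih]; first by rewrite !expr0 mul1mx scale1r.
  by rewrite exprS -mulmxE -mulmxA ih -scalemxAr Be scalerA -exprSr.
pose Bc := map_mx (real_complex R) B.
have me : map_mx (real_complex R) e = const_mx 1 by rewrite map_const_mx rmorph1.
have Bce : Bc *m (const_mx 1 : 'cV_n'.+1) = (l1%:C)%C *: const_mx 1.
  by rewrite -me -map_mxM Be map_mxZ.
have hcharB : char_poly Bc = \prod_j ('X - (lam j)%:P).
  rewrite -map_char_poly /B char_poly_sim ?mulVmx //; exact: hchar.
have hfac : char_poly Bc = ('X - ((l1%:C)%C)%:P) * \prod_(j | j != i1) ('X - (lam j)%:P).
  by rewrite hcharB (bigD1 i1) //= hl1.
have hroot : root (\prod_(j | j != i1) ('X - (lam j)%:P)) (lam i).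
  by rewrite /root horner_prod (bigD1 i hi) /= hornerXsubC subrr mul0r.
have [zr [zr0 zrB zre]] := @left_eig _ n' Bc (l1%:C)%C (lam i) _ Bce hfac hroot.
have zrk : forall m, zr *m Bc ^+ m = lam i ^+ m *: zr.
  elim => [|m ih]; first by rewrite !expr0 mulmx1 scale1r.
  by rewrite exprSr -mulmxE mulmxA ih -scalemxAl zrB scalerA -exprSr.
have mapX : forall m, map_mx (real_complex R) (B ^+ m) = Bc ^+ m.
  elim => [|m ih]; first by rewrite !expr0 map_mx1.
  by rewrite !exprS -!mulmxE map_mxM ih.
pose M := (B ^+ k)^T.
have Mc : map_mx (real_complex R) M = (Bc ^+ k)^T.
  by rewrite /M -mapX; apply/matrixP => a b; rewrite !mxE.
have hkey := @key R n'.+1 p hp M (lam i ^+ k) zr^T.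
have h : cmod (lam i ^+ k) <= tau p (B ^+ k).
  apply: hkey.
  - apply: contraNneq zr0 => h0; by rewrite -(trmxK zr) h0 trmx0.
  - transitivity ((zr *m (const_mx 1 : 'cV_n'.+1)) 0 0); last by rewrite zre mxE.
    by rewrite mxE; apply: eq_bigr => j _; rewrite !mxE mulr1.
  - rewrite Mc -trmx_mul zrk; apply/matrixP => a b; rewrite !mxE //.
  - move=> x hx.
    rewrite (eq_bigr (fun j => \sum_l (B ^+ k) l j * x l 0)) => [|j _]; last first.
      by rewrite !mxE; apply: eq_bigr => l _; rewrite !mxE.
    rewrite exchange_big /= (eq_bigr (fun l => l1 ^+ k * x l 0)) => [|l _].
      by rewrite -mulr_sumr hx mulr0.
    rewrite -mulr_suml; have := congr1 (fun X : 'cV_n'.+1 => X l 0) (Bke k).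
    by rewrite !mxE mulr1 => <-; congr (_ * _); apply: eq_bigr => j _; rewrite /e mxE mulr1.
rewrite cmodX in h.
have -> : cmod (lam i) = (cmod (lam i) ^+ k) `^ (k%:R^-1).
  rewrite -powR_mulrn ?cmod_ge0 // -powRrM mulfV ?powRr1 ?cmod_ge0 //.
  by rewrite pnatr_eq0 -lt0n.
apply: ge0_ler_powR; rewrite ?nnegrE ?invr_ge0 ?ler0n ?exprn_ge0 ?cmod_ge0 //.
exact: le_trans (exprn_ge0 k (cmod_ge0 _ _)) h.
Qed.
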